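(* Let $m,n\in\mathbb{N}$ and for $1\le\ell\le m$ let $r_{\ell},s_{\ell}$ be nonnegative integers with $s_\ell+1\ge r_\ell$, and let $a_{1,\ell},\dots,a_{r_{\ell},\ell},b_{1,\ell},\dots,b_{s_{\ell},\ell}\in\mathbb{C}$ be such that \[ \frac{(a_{1,\ell})_{N}\cdots(a_{r_{\ell},\ell})_{N}}{(b_{1,\ell})_{N}\cdots(b_{s_{\ell},\ell})_{N}}\ge0\quad\text{for all }N\in\mathbb{N}_{0}. \] Let $z_{j,\ell}\in\mathbb{C}$ ($1\le j\le n$), where if $s_{\ell}+1=r_{\ell}$ we assume $|z_{j,\ell}|<1$ for all $j$. Then the $n\times n$ matrix \[ \left(\prod_{\ell=1}^{m}{}_{r_{\ell}}F_{s_{\ell}}\left(\begin{array}{c}a_{1,\ell},\dots,a_{r_{\ell},\ell}\\ b_{1,\ell},\dots,b_{s_{\ell},\ell}\end{array}\bigg|\,z_{j,\ell}\overline{z_{k,\ell}}\right)\right)_{j,k=1}^{n} \] is positive semidefinite.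
   Context: $(a)_N=\Gamma(a+N)/\Gamma(a)=a(a+1)\cdots(a+N-1)$. For $s+1\ge r$, ${}_{r}F_{s}\left(\begin{array}{c}a_{1},\dots,a_{r}\\ b_{1},\dots,b_{s}\end{array}\big|z\right)=\sum_{N=0}^{\infty}\frac{(a_1)_N\cdots(a_r)_N}{N!\,(b_1)_N\cdots(b_s)_N}z^{N}$, for $z\in\mathbb{C}$ if $s+1>r$ and $|z|<1$ if $s+1=r$. A complex matrix $A=(a_{j,k})$ is positive semidefinite if $\sum_{j,k}a_{j,k}w_j\overline{w_k}\ge0$ for all complex $w_j$. *)

(* Defs.v *)
From HB Require Import structures.
From mathcomp Require Import all_boot all_order all_algebra.
From mathcomp Require Import all_classical all_reals topology normedtype sequences.
From mathcomp Require Import complex.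
Set Implicit Arguments. Unset Strict Implicit. Unset Printing Implicit Defensive.
Import Order.TTheory GRing.Theory Num.Theory.
Import numFieldTopology.Exports numFieldNormedType.Exports.
Local Open Scope ring_scope.

Definition poch (K : pzRingType) (a : K) (N : nat) : K :=
  \prod_(i < N) (a + i%:R).

Definition poch_ratio (K : fieldType) (a b : seq K) (N : nat) : K :=
  (\prod_(x <- a) poch x N) / (\prod_(x <- b) poch x N).

Definition hyp_coef (K : fieldType) (a b : seq K) (N : nat) : K :=
  poch_ratio a b N / N`!%:R.

Definition hypergeom (R : realType) (a b : seq R[i]) (z : R[i]) : R[i] :=
  (limn (series (fun N : nat => (hyp_coef a b N * z ^+ N : (R[i])^o))) : R[i]).

(* Main.v *)
Require Import Defs.
From HB Require Import structures.
From mathcomp Require Import all_boot all_order all_algebra.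
From mathcomp Require Import all_classical all_reals topology normedtype sequences.
From mathcomp Require Import complex.
From mathcomp Require Import lra ring.
Import Order.TTheory GRing.Theory Num.Theory.
Import numFieldTopology.Exports numFieldNormedType.Exports.
Local Open Scope ring_scope.

Module Helpers.
Import ComplexField.Normc.
Local Open Scope complex_scope.
Local Open Scope ring_scope.
Section P.
Variable R : realType.
Local Notation C := ((R[i])^o).

Lemma normC_le (a b : R) : `|Complex a b| <= (`|a| + `|b|)%:C.
Proof.
rewrite normc_def /= lecR.
have h : 0 <= `|a| + `|b| by rewrite addr_ge0.
rewrite -(ger0_norm h) -sqrtr_sqr ler_sqrt ?sqr_ge0 //.
rewrite -(real_normK (num_real a)) -(real_normK (num_real b)).
have ha := normr_ge0 a; have hb := normr_ge0 b.
nra.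
Qed.

Lemma complex_cvg (u : nat -> C) :
  cvgn (fun n => complex.Re (u n)) -> cvgn (fun n => complex.Im (u n)) -> cvgn u.
Proof.
move=> /cvg_ex [p hp] /cvg_ex [q hq] /=.
apply/cvg_ex; exists (Complex p q : C).
apply/cvgrPdist_lt => e e0.
have e0' : 0 < complex.Re e by move: e0; rewrite ltcE => /andP[].
have eIm : complex.Im e = 0 by move: e0; rewrite ltcE => /andP[/eqP].
have e2 : 0 < complex.Re e / 2 by rewrite divr_gt0.
move: hp => /cvgrPdist_lt /(_ _ e2) hp.
move: hq => /cvgrPdist_lt /(_ _ e2) hq.
near=> t.
have h1 : `|p - complex.Re (u t)| < complex.Re e / 2 by near: t.
have h2 : `|q - complex.Im (u t)| < complex.Re e / 2 by near: t.
have -> : (Complex p q : C) - u t = Complex (p - complex.Re (u t)) (q - complex.Im (u t)).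
  by case: (u t).
apply: (le_lt_trans (normC_le _ _)).
rewrite ltcE /= eIm eqxx /=.
lra.
Unshelve. all: by end_near.
Qed.

Lemma real_series_cvg (v : nat -> R) (K q : R) : 0 <= q < 1 ->
  (forall n, `|v n| <= K * q ^+ n) -> cvgn (series v).
Proof.
move=> /andP[q0 q1] hv.
have K0 : 0 <= K by have := hv 0%N; rewrite expr0 mulr1; apply: le_trans.
apply: (@normed_cvg _ R^o).
apply: (@series_le_cvg _ _ (geometric K q)).
- by move=> n; rewrite normr_ge0.
- by move=> n; rewrite /= mulr_ge0 // exprn_ge0.
- by move=> n; rewrite /= hv.
- by apply: is_cvg_geometric_series; rewrite ger0_norm.
Qed.

Lemma ratio_bound (t : nat -> R) N0 q : 0 < q -> (forall n, 0 <= t n) ->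
  (forall n, (N0 <= n)%N -> t n.+1 <= q * t n) -> exists K, forall n, t n <= K * q ^+ n.
Proof.
move=> q0 t0 ht.
exists (\sum_(k < N0.+1) t k / q ^+ k) => n.
have qn0 k : 0 < q ^+ k by rewrite exprn_gt0.
have le_sum k : (k <= N0)%N -> t k / q ^+ k <= \sum_(k < N0.+1) t k / q ^+ k.
  move=> hk; rewrite (bigD1 (Ordinal (hk : (k < N0.+1)%N))) //= lerDl.
  by apply: sumr_ge0 => i _; rewrite divr_ge0 // ltW.
have hd d : t (N0 + d)%N <= t N0 * q ^+ d.
  elim: d => [|d IH]; first by rewrite addn0 expr0 mulr1.
  rewrite addnS; apply: (le_trans (ht _ (leq_addr _ _))).
  by rewrite exprS mulrCA ler_pM2l.
case: (leqP n N0) => hn.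
  by have := le_sum n hn; rewrite ler_pdivrMr.
have := le_sum N0 (leqnn _).
rewrite -(ler_pM2r (qn0 n)) => h2.
have hN : (N0 <= n)%N by exact: ltnW.
move: (hd (n - N0)%N); rewrite (subnKC hN) => h1.
apply: (le_trans h1); apply: le_trans h2.
rewrite -[in leRHS](subnKC hN) exprD mulrA divfK //.
exact: lt0r_neq0.
Qed.
Lemma normc_ge0' (x : R[i]) : 0 <= normc x.
Proof. by have := normr_ge0 x; rewrite ler0c. Qed.

Lemma Re_series (u : nat -> C) n : complex.Re (series u n) = series (fun k => complex.Re (u k)) n.
Proof.
elim: n => [|n IH]; first by rewrite /series /= !big_geq.
by rewrite !seriesSr -IH; case: (series u n); case: (u n).
Qed.

Lemma Im_series (u : nat -> C) n : complex.Im (series u n) = series (fun k => complex.Im (u k)) n.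
Proof.
elim: n => [|n IH]; first by rewrite /series /= !big_geq.
by rewrite !seriesSr -IH; case: (series u n); case: (u n).
Qed.

Lemma Re_le (x : R[i]) : `|complex.Re x| <= normc x.
Proof. by have := normc_ge_Re x; rewrite lecR. Qed.

Lemma Im_le (x : R[i]) : `|complex.Im x| <= normc x.
Proof.
case: x => a b; rewrite /normc /=.
rewrite -sqrtr_sqr ler_sqrt ?addr_ge0 ?sqr_ge0 //.
by rewrite lerDr sqr_ge0.
Qed.

Lemma cvg_ratio (u : nat -> C) N0 q : 0 < q < 1 ->
  (forall n, (N0 <= n)%N -> normc (u n.+1) <= q * normc (u n)) -> cvgn (series u).
Proof.
move=> /andP[q0 q1] hu.
have [K hK] := @ratio_bound (fun n => normc (u n)) N0 q q0 (fun n => normc_ge0' _) hu.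
apply: complex_cvg.
- rewrite (eq_is_cvg _ (fun n => Re_series u n)).
  refine (@real_series_cvg _ K q _ _); first by rewrite (ltW q0) q1.
  by move=> n; apply: le_trans (Re_le _) (hK n).
- rewrite (eq_is_cvg _ (fun n => Im_series u n)).
  refine (@real_series_cvg _ K q _ _); first by rewrite (ltW q0) q1.
  by move=> n; apply: le_trans (Im_le _) (hK n).
Qed.
End P.
Section P3.
Variable R : realType.

Lemma pow_conv (D t : R) r : 0 < D -> 0 <= t -> t <= D ->
  (D + t) ^+ r * D <= D ^+ r * (D + (2 ^+ r - 1) * t).
Proof.
move=> D0 t0 tD.
elim: r => [|r IH]; first by rewrite !expr0 !mul1r subrr mul0r addr0.
have P0 : 0 <= D ^+ r by rewrite exprn_ge0 // ltW.
have c0 : 1 <= (2 : R) ^+ r by rewrite exprn_ege1 // ler1n.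
set Y := (D + t) ^+ r in IH *.
set P := D ^+ r in IH P0 *.
set c := (2 : R) ^+ r in IH c0 *.
rewrite !exprS -/Y -/P -/c.
have Y0 : 0 <= Y by rewrite exprn_ge0 // addr_ge0 // ltW.
have h1 : (D + t) * (Y * D) <= (D + t) * (P * (D + (c - 1) * t)).
  by apply: ler_wpM2l IH; rewrite addr_ge0 // ltW.
apply: (le_trans (_ : _ <= (D + t) * (P * (D + (c - 1) * t)))).
  by rewrite -mulrA.
have : 0 <= P * ((c - 1) * (t * (D - t))).
  by rewrite mulr_ge0 // mulr_ge0 ?subr_ge0 // mulr_ge0 // subr_ge0.
nra.
Qed.

Lemma real_bound r s (K0 X : R) : 0 <= K0 -> 0 <= X -> (r <= s.+1)%N ->
  (r = s.+1 -> X < 1) ->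
  exists D0 q, 1 <= D0 /\ 0 < q /\ q < 1 /\
    forall D, D0 <= D -> (D + 2 * K0) ^+ r * X <= q * D ^+ s.+1.
Proof.
move=> K00 X0 rs hX.
case: (ltnP r s.+1) => hr.
  have c0 : 1 <= (2 : R) ^+ r by rewrite exprn_ege1 // ler1n.
  exists (1 + 2 * K0 + 2 * 2 ^+ r * X), (1/2).
  split; first by nra.
  split; first by lra.
  split; first by lra.
  move=> D hD.
  have D1 : 1 <= D by nra.
  have P0 : 0 <= D ^+ r by rewrite exprn_ge0 // ltW //; lra.
  have h1 : (D + 2 * K0) ^+ r <= (2 * D) ^+ r.
    by apply: lerXn2r; rewrite ?nnegrE; nra.
  have h2 : D ^+ r.+1 <= D ^+ s.+1 by apply: ler_weXn2l.
  rewrite exprMn in h1.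
  rewrite exprS in h2.
  have : (D + 2 * K0) ^+ r * X <= 2 ^+ r * D ^+ r * X by rewrite ler_wpM2r.
  set Y := (D + 2 * K0) ^+ r in h1 *.
  set P := D ^+ r in h1 h2 P0 *.
  set Q := D ^+ s.+1 in h2 *.
  set c := (2 : R) ^+ r in c0 h1 hD *.
  have : 0 <= (D - 2 * c * X) * P by rewrite mulr_ge0 // subr_ge0; nra.
  nra.
have rE : r = s.+1 by apply/eqP; rewrite eqn_leq rs hr.
have X1 := hX rE.
rewrite -rE.
have c0 : 1 <= (2 : R) ^+ r by rewrite exprn_ege1 // ler1n.
set c := (2 : R) ^+ r - 1.
have cc0 : 0 <= c by rewrite /c subr_ge0.
exists (1 + 2 * K0 + 2 * c * (2 * K0) / (1 - X)), ((1 + X) / 2).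
have hX1 : 0 < 1 - X by lra.
have hq : 0 <= 2 * c * (2 * K0) / (1 - X) by rewrite divr_ge0 ?mulr_ge0 // ltW.
split; first by lra.
split; first by lra.
split; first by lra.
move=> D hD.
have D0 : 0 < D by lra.
have hct : 2 * c * (2 * K0) <= D * (1 - X).
  have : 2 * c * (2 * K0) / (1 - X) <= D by lra.
  by rewrite ler_pdivrMr.
have hK1 : 0 <= 2 * K0 by lra.
have hK2 : 2 * K0 <= D by lra.
have := @pow_conv D (2 * K0) r D0 hK1 hK2.
rewrite -/c => h.
have P0 : 0 <= D ^+ r by rewrite exprn_ge0 // ltW.
have Y0 : 0 <= (D + 2 * K0) ^+ r by rewrite exprn_ge0 //; lra.
set Y := (D + 2 * K0) ^+ r in h Y0 *.
set P := D ^+ r in h P0 *.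
have h3 : Y * X * D <= (1 + X) / 2 * P * D.
  have : Y * D * X <= P * (D + c * (2 * K0)) * X by apply: ler_wpM2r.
  have : 0 <= P * (D * (1 - X) - 2 * c * (2 * K0)) by rewrite mulr_ge0 // subr_ge0.
  have : 0 <= P * (c * (2 * K0) * (1 - X)) by rewrite mulr_ge0 // mulr_ge0 ?mulr_ge0 // ltW.
  nra.
by rewrite ler_pM2r in h3.
Qed.
End P3.
Section P4.
Variable R : realType.

Definition rho (a b : seq R[i]) (N : nat) : R[i] :=
  (\prod_(x <- a) (x + N%:R)) / (\prod_(x <- b) (x + N%:R)) / (N.+1)%:R.

Lemma pochS (x : R[i]) N : poch x N.+1 = poch x N * (x + N%:R).
Proof. by rewrite /poch big_ord_recr. Qed.

Lemma hyp_coefS a b N : hyp_coef a b N.+1 = hyp_coef a b N * rho a b N.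
Proof.
rewrite /hyp_coef /poch_ratio /rho.
rewrite (eq_bigr (fun x => poch x N * (x + N%:R))); last by move=> x _; rewrite pochS.
rewrite [X in _ / X / _](eq_bigr (fun x => poch x N * (x + N%:R))); last by move=> x _; rewrite pochS.
rewrite !big_split /= factS natrM !invfM.
ring.
Qed.

Lemma normc_prod (s : seq R[i]) (F : R[i] -> R[i]) :
  normc (\prod_(x <- s) F x) = \prod_(x <- s) normc (F x).
Proof.
by elim: s => [|x s IH]; rewrite ?big_nil ?normc1 // !big_cons normcM IH.
Qed.

Lemma normc_natr N : normc (N%:R : R[i]) = N%:R.
Proof.
apply: (@complexI R).
transitivity (`|N%:R : R[i]|); first by [].
by rewrite normr_nat rmorph_nat.
Qed.

Lemma prod_le_pow (s : seq R[i]) (f : R[i] -> R) (c : R) :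
  (forall x, x \in s -> 0 <= f x <= c) -> \prod_(x <- s) f x <= c ^+ size s.
Proof.
elim: s => [|x s IH] h; first by rewrite big_nil expr0.
rewrite big_cons exprS /=.
have /andP[h1 h2] := h x (mem_head _ _).
apply: ler_pM => //.
  rewrite big_seq; apply: prodr_ge0 => y hy.
  by have /andP[] := h y (mem_behead (hy : y \in behead (x :: s))).
by apply: IH => y hy; apply: h; rewrite in_cons hy orbT.
Qed.

Lemma prod_ge_pow (s : seq R[i]) (f : R[i] -> R) (c : R) : 0 <= c ->
  (forall x, x \in s -> c <= f x) -> c ^+ size s <= \prod_(x <- s) f x.
Proof.
move=> c0; elim: s => [|x s IH] h; first by rewrite big_nil expr0.
rewrite big_cons exprS /=.
apply: ler_pM => //; first by rewrite exprn_ge0.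
  exact: h (mem_head _ _).
by apply: IH => y hy; apply: h; rewrite in_cons hy orbT.
Qed.

Lemma normc_le_sum (s : seq R[i]) x : x \in s -> normc x <= \sum_(y <- s) normc y.
Proof.
move=> hx; rewrite (big_rem x hx) /= lerDl.
by apply: sumr_ge0 => y _; apply: normc_ge0'.
Qed.

Lemma rho_bound (a b : seq R[i]) N :
  let K0 := \sum_(x <- a) normc x + \sum_(x <- b) normc x in
  1 <= N%:R - K0 ->
  normc (rho a b N) * (N%:R - K0) ^+ (size b).+1 <= (N%:R - K0 + 2 * K0) ^+ size a.
Proof.
move=> K0 hD.
set D := N%:R - K0.
have Ka x : x \in a -> normc x <= K0.
  move=> hx; apply: le_trans (@normc_le_sum a x hx) _.
  by rewrite lerDl; apply: sumr_ge0 => y _; apply: normc_ge0'.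
have Kb x : x \in b -> normc x <= K0.
  move=> hx; apply: le_trans (@normc_le_sum b x hx) _.
  by rewrite lerDr; apply: sumr_ge0 => y _; apply: normc_ge0'.
have K00 : 0 <= K0 by rewrite addr_ge0 // sumr_ge0 // => y _; apply: normc_ge0'.
set A := \prod_(x <- a) normc (x + N%:R).
set B := \prod_(x <- b) normc (x + N%:R).
have hA : A <= (D + 2 * K0) ^+ size a.
  apply: prod_le_pow => x hx; rewrite normc_ge0' /=.
  apply: le_trans (le_normcD _ _) _; rewrite normc_natr.
  have := Ka x hx; rewrite /D; lra.
have hB : D ^+ size b <= B.
  apply: prod_ge_pow => [|x hx]; first by rewrite /D; lra.
  have := le_normcD (x + N%:R) (- x).
  rewrite normcN [x + _]addrC addrK normc_natr.
  have := Kb x hx; rewrite /D; lra.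
have hN : D <= N.+1%:R.
  by rewrite /D -natr1 lerBlDr -addrA lerDl addr_ge0.
have Dp0 : 0 < D by apply: lt_le_trans hD.
have Dp : 0 < D ^+ size b by rewrite exprn_gt0.
have Bp : 0 < B by apply: lt_le_trans hB.
have Np : 0 < N.+1%:R :> R by rewrite ltr0n.
have -> : normc (rho a b N) = A / B / N.+1%:R.
  by rewrite /rho !normcM !normcV !normc_prod normc_natr.
apply: le_trans hA.
rewrite exprSr.
have : D ^+ size b * D <= B * N.+1%:R.
  apply: ler_pM => //; first by rewrite exprn_ge0 //; lra.
  lra.
move=> h.
rewrite -(ler_pM2r (mulr_gt0 Bp Np)).
have -> : A / B / N.+1%:R * (D ^+ size b * D) * (B * N.+1%:R) = A * (D ^+ size b * D).
  by field; rewrite (gt_eqF Bp) andbT addrC natr1 pnatr_eq0.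
have A0 : 0 <= A by rewrite /A big_seq; apply: prodr_ge0 => x _; apply: normc_ge0'.
by apply: ler_wpM2l.
Qed.
End P4.
Section P5.
Lemma normc4 (R : realType) (h r x v : R[i]) :
  normc ((h * r) * (x * v)) = (normc r * normc x) * (normc h * normc v).
Proof. rewrite !normcM; ring. Qed.

Variable R : realType.
Local Notation C := ((R[i])^o).

Lemma hyp_cvg (a b : seq R[i]) (x : R[i]) : (size a <= (size b).+1)%N ->
  (size a = (size b).+1 -> normc x < 1) ->
  cvgn (series (fun N => (hyp_coef a b N * x ^+ N : C))).
Proof.
move=> hs hx.
set K0 := \sum_(y <- a) normc y + \sum_(y <- b) normc y.
have K00 : 0 <= K0 by rewrite addr_ge0 // sumr_ge0 // => y _; apply: normc_ge0'.
have [D0 [q [D01 [q0 [q1 hq]]]]] :=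
  @real_bound R (size a) (size b) K0 (normc x) K00 (@normc_ge0' R x) hs hx.
set N0 := (Num.truncn (D0 + K0)).+1.
apply: (@cvg_ratio R _ N0 q); first by rewrite q0 q1.
move=> N hN.
have hD : D0 <= N%:R - K0.
  have := truncnS_gt (D0 + K0); rewrite -/N0 => h.
  have : (N0%:R : R) <= N%:R by rewrite ler_nat.
  lra.
have hD1 : 1 <= N%:R - K0 by apply: le_trans hD.
have := @rho_bound R a b N hD1; rewrite -/K0 => h1.
have := hq _ hD => h2.
set D := N%:R - K0 in hD hD1 h1 h2.
have DP : 0 < D ^+ (size b).+1 by rewrite exprn_gt0 // (lt_le_trans ltr01 hD1).
have h3 : normc (rho R a b N) * normc x <= q.
  rewrite -(ler_pM2r DP).
  apply: le_trans h2.
  rewrite mulrAC; apply: ler_wpM2r; first exact: normc_ge0'.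
  exact: h1.
rewrite hyp_coefS exprS.
move: h3; generalize (rho R a b N) (hyp_coef a b N) => r hc h3.
rewrite normc4 normcM.
apply: ler_wpM2r => //.
by rewrite mulr_ge0 // ?exprn_ge0 // normc_ge0'.
Qed.
End P5.
Section P6.
Variable R : realType.

Lemma psd_form (n : nat) (I : finType) (Cf : I -> R[i]) (g : I -> 'I_n -> R[i])
  (w : 'I_n -> R[i]) : (forall f, 0 <= Cf f) ->
  0 <= \sum_(j < n) \sum_(k < n) (\sum_f Cf f * g f j * (g f k)^*) * w j * (w k)^*.
Proof.
move=> C0.
have -> : \sum_(j < n) \sum_(k < n) (\sum_f Cf f * g f j * (g f k)^*) * w j * (w k)^*
  = \sum_f Cf f * ((\sum_(j < n) g f j * w j) * (\sum_(j < n) g f j * w j)^*).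
  rewrite (eq_bigr (fun j => \sum_f \sum_(k < n) Cf f * (g f j * w j) * (g f k * w k)^*)); last first.
    move=> j _; rewrite (eq_bigr (fun k => \sum_f Cf f * (g f j * w j) * (g f k * w k)^*)).
      by rewrite exchange_big.
    move=> k _; rewrite !mulr_suml; apply: eq_bigr => f _.
    by rewrite rmorphM /=; ring.
  rewrite exchange_big; apply: eq_bigr => f _.
  rewrite rmorph_sum mulr_suml mulr_sumr; apply: eq_bigr => j _.
  rewrite mulr_sumr mulr_sumr; apply: eq_bigr => k _.
  ring.
apply: sumr_ge0 => f _.
by rewrite mulr_ge0 // mul_conjC_ge0.
Qed.

Lemma prod_sum_expand (m M : nat) (c : 'I_m -> nat -> R[i]) (u v : 'I_m -> R[i]) :
  \prod_(l < m) \sum_(N < M) c l N * (u l * (v l)^*) ^+ N =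
  \sum_(f : {ffun 'I_m -> 'I_M}) (\prod_(l < m) c l (f l)) *
     (\prod_(l < m) u l ^+ (f l)) * (\prod_(l < m) v l ^+ (f l))^*.
Proof.
rewrite bigA_distr_bigA /=; apply: eq_bigr => f _.
rewrite rmorph_prod -!big_split /=; apply: eq_bigr => l _.
by rewrite exprMn rmorphXn mulrA.
Qed.
End P6.
Section P7.
Variable R : realType.
Local Notation C := ((R[i])^o).

Lemma cvg_prod_seq (I : Type) (s : seq I) (u : I -> nat -> C) (L : I -> C) :
  (forall i, (u i @ \oo --> L i)%classic) ->
  ((fun M => \prod_(i <- s) u i M) @ \oo --> \prod_(i <- s) L i)%classic.
Proof.
move=> h; elim: s => [|x s IH].
  rewrite big_nil.
  have -> : (fun M => \prod_(i <- [::]) u i M) = (fun _ => \prod_(i <- [::]) L i).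
    by apply: funext => M; rewrite !big_nil.
  rewrite big_nil; exact: cvg_cst.
have -> : (fun M => \prod_(i <- x :: s) u i M) = (fun M => u x M * \prod_(i <- s) u i M).
  by apply: funext => M; rewrite big_cons.
rewrite big_cons.
exact: (cvgM (h x) IH).
Qed.

Lemma cvg_sum_seq (I : Type) (s : seq I) (u : I -> nat -> C) (L : I -> C) :
  (forall i, (u i @ \oo --> L i)%classic) ->
  ((fun M => \sum_(i <- s) u i M) @ \oo --> \sum_(i <- s) L i)%classic.
Proof.
move=> h; elim: s => [|x s IH].
  rewrite big_nil.
  have -> : (fun M => \sum_(i <- [::]) u i M) = (fun _ => \sum_(i <- [::]) L i).
    by apply: funext => M; rewrite !big_nil.
  rewrite big_nil; exact: cvg_cst.
have -> : (fun M => \sum_(i <- x :: s) u i M) = (fun M => u x M + \sum_(i <- s) u i M).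
  by apply: funext => M; rewrite big_cons.
rewrite big_cons.
exact: (cvgD (h x) IH).
Qed.

Lemma ge0_lim (u : nat -> C) (L : C) : (u @ \oo --> L)%classic ->
  (forall M, 0 <= u M) -> 0 <= L.
Proof.
move=> hu h0.
have h1 : ((fun M => `|u M|) @ \oo --> `|L|)%classic by apply: cvg_norm.
have h2 : (fun M => `|u M|) = u by apply: funext => M; rewrite ger0_norm.
rewrite h2 in h1.
have -> : L = `|L| by apply: (cvg_unique _ hu h1).
exact: normr_ge0.
Qed.
End P7.

Lemma normc_conj (R : realType) (y : R[i]) : normc (y^*) = normc y.
Proof.
apply: (@complexI R).
transitivity (`|y^*|); first by [].
by rewrite norm_conjC.
Qed.

Local Close Scope complex_scope.
Lemma main_aux (R : realType) (m n : nat)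
  (a b : 'I_m -> seq R[i]) (z : 'I_n -> 'I_m -> R[i]) :
  (forall l : 'I_m, (size (a l) <= (size (b l)).+1)%N) ->
  (forall (l : 'I_m) (N : nat), 0 <= poch_ratio (a l) (b l) N) ->
  (forall (l : 'I_m) (j : 'I_n), size (a l) = (size (b l)).+1 -> `|z j l| < 1) ->
  forall w : 'I_n -> R[i],
    0 <= \sum_(j < n) \sum_(k < n)
           (\prod_(l < m) hypergeom (a l) (b l) (z j l * (z k l)^*))
             * w j * (w k)^*.
Proof.
move=> hs hpos hz w.
pose c l N := hyp_coef (a l) (b l) N.
have c0 : forall l N, 0 <= c l N.
  by move=> l N; rewrite /c /hyp_coef divr_ge0 // ler0n.
pose x j k l := z j l * (z k l)^*.
pose S l y M := series (fun N => (hyp_coef (a l) (b l) N * y ^+ N : (R[i])^o)) M.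
have hS : forall j k l, (S l (x j k l) @ \oo --> (hypergeom (a l) (b l) (x j k l) : (R[i])^o))%classic.
  move=> j k l.
  have hx : size (a l) = (size (b l)).+1 -> normc (x j k l) < 1.
    move=> E.
    have h1 : normc (z j l) < 1 by have := hz l j E; rewrite ltcE /= => /andP[_].
    have h2 : normc (z k l) < 1 by have := hz l k E; rewrite ltcE /= => /andP[_].
    rewrite /x normcM normc_conj.
    have := @normc_ge0' R (z j l); have := @normc_ge0' R (z k l).
    nra.
  exact: (@hyp_cvg R _ _ _ (hs l) hx).
pose Q M := \sum_(j < n) \sum_(k < n) (\prod_(l < m) S l (x j k l) M) * w j * (w k)^*.
have hQ : (Q @ \oo --> (\sum_(j < n) \sum_(k < n)
           (\prod_(l < m) hypergeom (a l) (b l) (z j l * (z k l)^*))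
             * w j * (w k)^* : (R[i])^o))%classic.
  apply: cvg_sum_seq => j.
  apply: cvg_sum_seq => k.
  apply: cvgM; last exact: cvg_cst.
  apply: cvgM; last exact: cvg_cst.
  by apply: cvg_prod_seq => l; apply: hS.
apply: (@ge0_lim R _ _ hQ) => M.
have -> : Q M = \sum_(j < n) \sum_(k < n)
   (\sum_(f : {ffun 'I_m -> 'I_M}) (\prod_(l < m) c l (f l)) *
     (\prod_(l < m) z j l ^+ (f l)) * (\prod_(l < m) z k l ^+ (f l))^*) * w j * (w k)^*.
  apply: eq_bigr => j _; apply: eq_bigr => k _.
  rewrite -prod_sum_expand.
  congr (_ * _ * _); apply: eq_bigr => l _.
  by rewrite /S /series /= big_mkord.
apply: psd_form => f.
by apply: prodr_ge0 => l _.
Qed.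
End Helpers.

Theorem mainTheorem7 (R : realType) (m n : nat)
  (a b : 'I_m -> seq R[i]) (z : 'I_n -> 'I_m -> R[i]) :
  (forall l : 'I_m, (size (a l) <= (size (b l)).+1)%N) ->
  (forall (l : 'I_m) (N : nat), 0 <= poch_ratio (a l) (b l) N) ->
  (forall (l : 'I_m) (j : 'I_n), size (a l) = (size (b l)).+1 -> `|z j l| < 1) ->
  forall w : 'I_n -> R[i],
    0 <= \sum_(j < n) \sum_(k < n)
           (\prod_(l < m) hypergeom (a l) (b l) (z j l * (z k l)^*))
             * w j * (w k)^*.
Proof. exact: Helpers.main_aux. Qed.
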